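(* Let $n>0$, $m\ge 0$, let $a_1,\dots,a_n$ be atoms and $l_1,\dots,l_m$ literals (atoms or negated atoms $\neg a$). Then the formula $l_1\wedge\cdots\wedge l_m\to a_1\vee\cdots\vee a_n$ is strongly equivalent to the set of the $n$ formulas, for $i=1,\dots,n$, $$(l_1\wedge\cdots\wedge l_m\wedge(a_1\to a_i)\wedge\cdots\wedge(a_n\to a_i))\to a_i.$$
   Context: Formulas are built from atoms and $\bot$ using $\wedge,\vee,\to$ ($\top:=\bot\to\bot$, $\neg F:=F\to\bot$); an empty conjunction is $\top$. Reduct: $\bot^X=\bot$; $a^X=a$ if $a\in X$, else $\bot$; $(F\otimes G)^X=F^X\otimes G^X$ if $X\models F\otimes G$, else $\bot$; $\Gamma^X=\{F^X:F\in\Gamma\}$. $X$ is a stable model of $\Gamma$ if $X\models\Gamma^X$ and no proper subset of $X$ satisfies $\Gamma^X$. Theories $\Gamma_1,\Gamma_2$ are strongly equivalent if for every theory $\Gamma$, $\Gamma_1\cup\Gamma$ and $\Gamma_2\cup\Gamma$ have the same stable models. *)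

(* Defs.v *)
From Stdlib Require Import List Classical ClassicalEpsilon.
Import ListNotations.
Set Implicit Arguments.

Section Logic.
Variable A : Type.

Inductive form : Type :=
| Atom : A -> form
| Bot : form
| And : form -> form -> form
| Or : form -> form -> form
| Imp : form -> form -> form.

Definition Top : form := Imp Bot Bot.
Definition Neg (F : form) : form := Imp F Bot.

Definition interp := A -> Prop.
Definition theory := form -> Prop.

Fixpoint sat (X : interp) (F : form) : Prop :=
  match F with
  | Atom a => X a
  | Bot => False
  | And F G => sat X F /\ sat X G
  | Or F G => sat X F \/ sat X G
  | Imp F G => sat X F -> sat X G
  end.

Definition satT (X : interp) (G : theory) : Prop := forall F, G F -> sat X F.

Definition decP (P : Prop) : {P} + {~ P} := excluded_middle_informative P.

Fixpoint reduct (X : interp) (F : form) : form :=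
  match F with
  | Atom a => if decP (X a) then Atom a else Bot
  | Bot => Bot
  | And F1 F2 => if decP (sat X (And F1 F2)) then And (reduct X F1) (reduct X F2) else Bot
  | Or F1 F2 => if decP (sat X (Or F1 F2)) then Or (reduct X F1) (reduct X F2) else Bot
  | Imp F1 F2 => if decP (sat X (Imp F1 F2)) then Imp (reduct X F1) (reduct X F2) else Bot
  end.

Definition reductT (X : interp) (G : theory) : theory :=
  fun H => exists F, G F /\ H = reduct X F.

Definition proper_subset (Y X : interp) : Prop :=
  (forall a, Y a -> X a) /\ exists a, X a /\ ~ Y a.

Definition stable_model (X : interp) (G : theory) : Prop :=
  satT X (reductT X G) /\ ~ (exists Y, proper_subset Y X /\ satT Y (reductT X G)).

Definition unionT (G1 G2 : theory) : theory := fun F => G1 F \/ G2 F.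

Definition strongly_equivalent (G1 G2 : theory) : Prop :=
  forall G : theory, forall X : interp,
    stable_model X (unionT G1 G) <-> stable_model X (unionT G2 G).

Inductive literal : Type :=
| PosLit : A -> literal
| NegLit : A -> literal.

Definition lit_form (l : literal) : form :=
  match l with PosLit a => Atom a | NegLit a => Neg (Atom a) end.

Fixpoint bigAnd (l : list form) : form :=
  match l with
  | [] => Top
  | [F] => F
  | F :: r => And F (bigAnd r)
  end.

(* F1 \/ ... \/ Fk  (only used for k > 0; empty disjunction is Bot) *)
Fixpoint bigOr (l : list form) : form :=
  match l with
  | [] => Bot
  | [F] => F
  | F :: r => Or F (bigOr r)
  end.

End Logic.

Arguments Bot {A}.
Arguments Top {A}.

(* Main.v *)
Require Import Defs.
From Stdlib Require Import List Classical.
Import ListNotations.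

Section HT.
Variable A : Type.

Fixpoint ht (Y X : interp A) (F : form A) : Prop :=
  match F with
  | Atom a => Y a
  | Bot => False
  | And F G => ht Y X F /\ ht Y X G
  | Or F G => ht Y X F \/ ht Y X G
  | Imp F G => (ht Y X F -> ht Y X G) /\ (sat X F -> sat X G)
  end.

Definition sub (Y X : interp A) := forall a, Y a -> X a.

Lemma persist Y X F : sub Y X -> ht Y X F -> sat X F.
Proof. intros H; induction F; simpl; firstorder. Qed.

Lemma ht_XX X F : ht X X F <-> sat X F.
Proof. induction F; simpl; firstorder. Qed.

Lemma reduct_ht Y X F : sub Y X -> (sat Y (reduct X F) <-> ht Y X F).
Proof.
  intros H; induction F; simpl.
  - destruct (decP (X a)); simpl; firstorder.
  - tauto.
  - destruct (decP _); simpl.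
    + rewrite IHF1, IHF2; tauto.
    + split; [tauto|]. intros [h1 h2]. apply n; split; eapply persist; eauto.
  - destruct (decP _); simpl.
    + rewrite IHF1, IHF2; tauto.
    + split; [tauto|]. intros [h1|h2]; apply n; [left|right]; eapply persist; eauto.
  - destruct (decP _); simpl.
    + rewrite IHF1, IHF2; tauto.
    + split; [tauto|]. intros [h1 h2]. tauto.
Qed.

Definition htT Y X (G : theory A) := forall F, G F -> ht Y X F.

Lemma satT_reduct Y X G : sub Y X -> (satT Y (reductT X G) <-> htT Y X G).
Proof.
  intros H; unfold satT, reductT, htT; split.
  - intros h F GF. apply (@reduct_ht Y X F H). apply h. eauto.
  - intros h F' [F [GF ->]]. apply (@reduct_ht Y X F H). auto.
Qed.

Lemma se_of_ht (G1 G2 : theory A) :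
  (forall Y X, sub Y X -> (htT Y X G1 <-> htT Y X G2)) -> strongly_equivalent G1 G2.
Proof.
  intros E G X.
  assert (U : forall G0 Y, sub Y X -> (satT Y (reductT X (unionT G0 G)) <->
            htT Y X G0 /\ htT Y X G)).
  { intros G0 Y s. rewrite satT_reduct by auto. unfold htT, unionT. firstorder. }
  assert (sXX : sub X X) by (intros a h; exact h).
  unfold stable_model. rewrite (U G1 X sXX), (U G2 X sXX), (E X X sXX).
  split; intros [h1 h2]; split; auto; intros [Y [[s p] hy]]; apply h2; exists Y;
    split; try split; auto; rewrite U in *; auto; rewrite E in *; tauto.
Qed.

Lemma ht_bigAnd Y X (L : list (form A)) : ht Y X (bigAnd L) <-> (forall F, In F L -> ht Y X F).
Proof.
  induction L as [|F L IH]; simpl.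
  - split; [tauto|]. intros; split; tauto.
  - destruct L as [|G L].
    + split; [intros h F0 [<-|[]]; auto | intros h; auto].
    + simpl in IH. change (ht Y X F /\ ht Y X (bigAnd (G :: L)) <->
        (forall F0, F = F0 \/ G = F0 \/ In F0 L -> ht Y X F0)).
      rewrite IH. firstorder congruence.
Qed.

Lemma ht_bigOr Y X (L : list (form A)) : ht Y X (bigOr L) <-> (exists F, In F L /\ ht Y X F).
Proof.
  induction L as [|F L IH]; simpl.
  - firstorder.
  - destruct L as [|G L].
    + firstorder congruence.
    + change (ht Y X F \/ ht Y X (bigOr (G :: L)) <->
        (exists F0, (F = F0 \/ G = F0 \/ In F0 L) /\ ht Y X F0)).
      rewrite IH. simpl. firstorder congruence.
Qed.

Lemma sat_bigAnd X (L : list (form A)) : sat X (bigAnd L) <-> (forall F, In F L -> sat X F).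
Proof.
  rewrite <- ht_XX, ht_bigAnd. split; intros h F i; apply ht_XX; auto.
Qed.

Lemma sat_bigOr X (L : list (form A)) : sat X (bigOr L) <-> (exists F, In F L /\ sat X F).
Proof.
  rewrite <- ht_XX, ht_bigOr. split; intros [F [i h]]; exists F; split; auto; apply ht_XX; auto.
Qed.

End HT.
Arguments ht {A}. Arguments sub {A}. Arguments htT {A}. Arguments persist {A}.
Arguments ht_bigAnd {A}. Arguments ht_bigOr {A}. Arguments sat_bigAnd {A}. Arguments sat_bigOr {A}. Arguments se_of_ht {A}.

Theorem lemma1 (A : Type) (as_ : list A) (ls : list (literal A)) :
  as_ <> [] ->
  strongly_equivalent
    (fun F => F = Imp (bigAnd (map (@lit_form A) ls)) (bigOr (map (@Atom A) as_)))
    (fun F => exists ai, In ai as_ /\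
       F = Imp (bigAnd (map (@lit_form A) ls ++ map (fun aj => Imp (Atom aj) (Atom ai)) as_))
               (Atom ai)).
Proof.
  intros Hne. apply se_of_ht. intros Y X s. unfold htT.
  set (LL := map (@lit_form A) ls).
  assert (HS : ht Y X (bigAnd LL) -> sat X (bigAnd LL)) by (apply persist; auto).
  assert (E1 : forall ai, ht Y X (Imp (bigAnd (LL ++ map (fun aj => Imp (Atom aj) (Atom ai)) as_)) (Atom ai))
     <-> ((ht Y X (bigAnd LL) /\ (forall aj, In aj as_ -> (Y aj -> Y ai) /\ (X aj -> X ai)) -> Y ai)
          /\ (sat X (bigAnd LL) /\ (forall aj, In aj as_ -> X aj -> X ai) -> X ai))).
  { intros ai. simpl. rewrite ht_bigAnd, sat_bigAnd, ht_bigAnd, sat_bigAnd.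
    assert (K1 : (forall F, In F (LL ++ map (fun aj => Imp (Atom aj) (Atom ai)) as_) -> ht Y X F)
      <-> (forall F, In F LL -> ht Y X F) /\ (forall aj, In aj as_ -> (Y aj -> Y ai) /\ (X aj -> X ai))).
    { split.
      - intros h; split.
        + intros F i; apply h, in_app_iff; auto.
        + intros aj i. exact (h (Imp (Atom aj) (Atom ai)) (proj2 (in_app_iff _ _ _) (or_intror (in_map _ _ _ i)))).
      - intros [h1 h2] F i. apply in_app_iff in i. destruct i as [i|i]; auto.
        apply in_map_iff in i. destruct i as [aj [<- i]]. exact (h2 aj i). }
    assert (K2 : (forall F, In F (LL ++ map (fun aj => Imp (Atom aj) (Atom ai)) as_) -> sat X F)
      <-> (forall F, In F LL -> sat X F) /\ (forall aj, In aj as_ -> X aj -> X ai)).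
    { split.
      - intros h; split.
        + intros F i; apply h, in_app_iff; auto.
        + intros aj i. exact (h (Imp (Atom aj) (Atom ai)) (proj2 (in_app_iff _ _ _) (or_intror (in_map _ _ _ i)))).
      - intros [h1 h2] F i. apply in_app_iff in i. destruct i as [i|i]; auto.
        apply in_map_iff in i. destruct i as [aj [<- i]]. exact (h2 aj i). }
    rewrite K1, K2. tauto. }
  assert (E0 : ht Y X (Imp (bigAnd LL) (bigOr (map (@Atom A) as_))) <->
    ((ht Y X (bigAnd LL) -> exists a, In a as_ /\ Y a) /\
     (sat X (bigAnd LL) -> exists a, In a as_ /\ X a))).
  { simpl. rewrite ht_bigOr, sat_bigOr, ht_bigAnd, sat_bigAnd.
    assert (K : forall P : form A -> Prop, (exists F, In F (map (@Atom A) as_) /\ P F) <->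
               (exists a, In a as_ /\ P (Atom a))).
    { intros P; split.
      - intros [F [i p]]. apply in_map_iff in i. destruct i as [a [<- i]]. eauto.
      - intros [a [i p]]. exists (Atom a); split; auto. apply in_map; auto. }
    rewrite (K (ht Y X)), (K (sat X)). simpl. tauto. }
  split.
  - intros h F [ai [i ->]]. apply E1. pose proof (proj1 E0 (h _ eq_refl)) as [h1 h2].
    split.
    + intros [hH hj]. destruct (h1 hH) as [a [ia ya]]. apply (hj a ia). auto.
    + intros [hS hj]. destruct (h2 hS) as [a [ia xa]]. eauto.
  - intros h F ->.
    assert (h' : forall ai, In ai as_ -> _) by (intros ai i; exact (proj1 (E1 ai) (h _ (ex_intro _ ai (conj i eq_refl))))).
    apply E0.
    assert (P2 : sat X (bigAnd LL) -> exists a, In a as_ /\ X a).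
    { intros hS. apply NNPP; intros nx.
      destruct as_ as [|a0 r]; [congruence|].
      destruct (h' a0 (or_introl eq_refl)) as [_ k].
      apply nx. exists a0; split; [left; auto|]. apply k; split; auto.
      intros aj ij xj. exfalso; eauto. }
    split; auto.
    intros hH. apply NNPP; intros ny.
    destruct (P2 (HS hH)) as [a [ia xa]].
    destruct (h' a ia) as [k _]. apply ny. exists a; split; auto. apply k; split; auto.
    intros aj ij; split; intros; [exfalso; eauto | auto].
Qed.
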